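(* Let $G$ be a large scale group having a basis $\{G_i\}_{i\ge1}$ for boundedly generated subgroups consisting of unbounded subgroups. If $m\le\infty$ and each $G_i$ (with the large scale structure induced from $G$) has at most $m$ ends, then $G$ has at most $m$ ends.
   Context: A large scale group is a group $G$ with a bornology $\mathcal B$ (a cover closed under subsets and finite unions) closed under inverses and products; uniformly bounded covers are those refining $\{gB\}_{g\in G}$ for some $B\in\mathcal B$; bounded sets are members of $\mathcal B$. A subgroup $H$ carries the induced large scale group structure with bornology $\{B\in\mathcal B: B\subseteq H\}$. $G$ (or a subgroup) is boundedly generated if it is generated by a bounded symmetric set. A basis for boundedly generated subgroups of $G$ is a sequence $\{G_i\}_{i\ge1}$ of boundedly generated subgroups of $G$ such that every bounded subset of $G$ is contained in some $G_i$ (equivalently, every boundedly generated subgroup lies in some $G_i$). For $A\subseteq G$ and a cover $\mathcal U$, $st(A,\mathcal U)$ is the union of members of $\mathcal U$ meeting $A$; $A$ is coarsely clopen if $st(A,\mathcal U)\cap st(G\setminus A,\mathcal U)$ is bounded for every uniformly bounded $\mathcal U$. An end is a family of unbounded coarsely clopen sets maximal with respect to all finite intersections being unbounded; the number of ends is the cardinality of the set of ends. *)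

(* Defs.v *)
From Stdlib Require Import List.
Import ListNotations.
Set Implicit Arguments.

Record LSGroup := {
  carrier :> Type;
  mul : carrier -> carrier -> carrier;
  inv : carrier -> carrier;
  one : carrier;
  mulA : forall x y z, mul x (mul y z) = mul (mul x y) z;
  mul1g : forall x, mul one x = x;
  mulVg : forall x, mul (inv x) x = one;
  bounded : (carrier -> Prop) -> Prop;
  bounded_cover : forall x, exists B, bounded B /\ B x;
  bounded_sub : forall A B, bounded B -> (forall x, A x -> B x) -> bounded A;
  bounded_union : forall A B, bounded A -> bounded B ->
      bounded (fun x => A x \/ B x);
  bounded_inv : forall B, bounded B -> bounded (fun x => B (inv x));
  bounded_mul : forall A B, bounded A -> bounded B ->
      bounded (fun x => exists a b, A a /\ B b /\ x = mul a b)
}.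

Section LS.
Variable G : LSGroup.

Definition subset (A B : G -> Prop) := forall x, A x -> B x.

Definition is_subgroup (H : G -> Prop) : Prop :=
  H (one G) /\ (forall x y, H x -> H y -> H (mul G x y)) /\
  (forall x, H x -> H (inv G x)).

Definition generated (S : G -> Prop) : G -> Prop :=
  fun x => forall K, is_subgroup K -> subset S K -> K x.

Definition symmetric (S : G -> Prop) := forall x, S x -> S (inv G x).

Definition bdd_generated_subgroup (H : G -> Prop) : Prop :=
  is_subgroup H /\ exists S, bounded G S /\ symmetric S /\
    forall x, H x <-> generated S x.

(** Induced large scale structure on a subgroup H: bounded sets are the
    bounded sets of G contained in H. *)
Definition bddH (H : G -> Prop) (A : G -> Prop) : Prop :=
  bounded G A /\ subset A H.

Definition unif_bdd_cover (H : G -> Prop) (U : (G -> Prop) -> Prop) : Prop :=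
  (forall x, H x -> exists V, U V /\ V x) /\
  (forall V, U V -> subset V H) /\
  exists B, bddH H B /\
    forall V, U V -> exists h, H h /\
      subset V (fun x => exists b, B b /\ x = mul G h b).

Definition star (A : G -> Prop) (U : (G -> Prop) -> Prop) : G -> Prop :=
  fun x => exists V, U V /\ V x /\ exists a, A a /\ V a.

Definition coarsely_clopen (H : G -> Prop) (A : G -> Prop) : Prop :=
  subset A H /\
  forall U, unif_bdd_cover H U ->
    bddH H (fun x => star A U x /\ star (fun y => H y /\ ~ A y) U x).

Definition inter_list (H : G -> Prop) (l : list (G -> Prop)) : G -> Prop :=
  fun x => H x /\ forall A, In A l -> A x.

Definition ends_family (H : G -> Prop) (E : (G -> Prop) -> Prop) : Prop :=
  (forall A, E A -> coarsely_clopen H A /\ ~ bddH H A) /\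
  (forall l, (forall A, In A l -> E A) -> ~ bddH H (inter_list H l)).

Definition is_end (H : G -> Prop) (E : (G -> Prop) -> Prop) : Prop :=
  ends_family H E /\
  forall F, ends_family H F -> (forall A, E A -> F A) -> forall A, F A -> E A.

(** H has at most m ends, m in {0,1,2,...} u {oo} (None = oo) *)
Definition at_most_ends (H : G -> Prop) (m : option nat) : Prop :=
  match m with
  | None => True
  | Some n => exists l : list ((G -> Prop) -> Prop), length l <= n /\
      forall E, is_end H E -> exists E', In E' l /\ forall A, E A <-> E' A
  end.

Definition bdd_gen_basis (Gi : nat -> G -> Prop) : Prop :=
  (forall i, bdd_generated_subgroup (Gi i)) /\
  (forall B, bounded G B -> exists i, subset B (Gi i)).

End LS.

(* Main.v *)
Require Import Defs.
From Stdlib Require Import List Classical Lia.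
Import ListNotations.
From mathcomp Require classical_sets.

Definition exteq {X : Type} (E E' : X -> Prop) := forall A, E A <-> E' A.

Fixpoint pwd {X : Type} (R : X -> X -> Prop) (L : list X) : Prop :=
  match L with
  | [] => True
  | x :: t => (forall y, In y t -> R x y) /\ pwd R t
  end.

Lemma mulgV (G : LSGroup) (x : G) : mul G x (inv G x) = one G.
Proof.
  rewrite <- (mul1g G (mul G x (inv G x))).
  rewrite <- (mulVg G (inv G x)) at 1.
  rewrite <- mulA. rewrite (mulA G (inv G x) x (inv G x)).
  rewrite mulVg, mul1g. apply mulVg.
Qed.

Lemma mulg1 (G : LSGroup) (x : G) : mul G x (one G) = x.
Proof.
  rewrite <- (mulVg G x), mulA, mulgV. apply mul1g.
Qed.

Lemma mulKV (G : LSGroup) (w y : G) : mul G (mul G w y) (inv G y) = w.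
Proof. rewrite <- mulA, mulgV. apply mulg1. Qed.

Lemma mulVK (G : LSGroup) (w y : G) : mul G (mul G w (inv G y)) y = w.
Proof. rewrite <- mulA, mulVg. apply mulg1. Qed.

Lemma mulKg (G : LSGroup) (x y : G) : mul G (inv G x) (mul G x y) = y.
Proof. rewrite mulA, mulVg. apply mul1g. Qed.

Lemma bdd_single (G : LSGroup) (a : G) : bounded G (fun x => x = a).
Proof.
  destruct (bounded_cover G a) as [B [HB Ba]].
  apply (bounded_sub G _ B HB). intros x ->. exact Ba.
Qed.

Lemma bddH_sub (G : LSGroup) (H A B : G -> Prop) :
  bddH G H B -> subset G A B -> bddH G H A.
Proof.
  intros [HB sB] sAB. split.
  - exact (bounded_sub G A B HB sAB).
  - intros x Ax. apply sB, sAB, Ax.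
Qed.

Lemma bddH_union (G : LSGroup) (H A B : G -> Prop) :
  bddH G H A -> bddH G H B -> bddH G H (fun x => A x \/ B x).
Proof.
  intros [HA sA] [HB sB]. split.
  - apply bounded_union; assumption.
  - intros x [Ax|Bx]; auto.
Qed.

Lemma bdd_empty (G : LSGroup) (H : G -> Prop) : bddH G H (fun _ => False).
Proof.
  split.
  - apply (bounded_sub G _ _ (bdd_single G (one G))). intros x [].
  - intros x [].
Qed.

Lemma star_mono (G : LSGroup) (A B : G -> Prop) U :
  subset G A B -> subset G (star G A U) (star G B U).
Proof.
  intros sAB x [V [UV [Vx [a [Aa Va]]]]]. exists V. repeat split; auto.
  exists a. auto.
Qed.

Lemma comp_cc (G : LSGroup) (H A : G -> Prop) :
  coarsely_clopen G H A -> coarsely_clopen G H (fun y => H y /\ ~ A y).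
Proof.
  intros [sA cA]. split.
  - intros x [Hx _]; exact Hx.
  - intros U HU. apply (bddH_sub G H _ _ (cA U HU)).
    intros x [s1 s2]. split.
    + apply (star_mono G (fun y => H y /\ ~ (H y /\ ~ A y)) A U); [|exact s2].
      intros y [Hy nA]. apply NNPP. intro nAy. apply nA. auto.
    + exact s1.
Qed.

Lemma inter_cc (G : LSGroup) (H X Y : G -> Prop) :
  coarsely_clopen G H X -> coarsely_clopen G H Y ->
  coarsely_clopen G H (fun x => X x /\ Y x).
Proof.
  intros [sX cX] [sY cY]. split.
  - intros x [Xx _]; auto.
  - intros U HU. apply (bddH_sub G H _ _ (bddH_union G H _ _ (cX U HU) (cY U HU))).
    intros x [[V1 [U1 [V1x [a [[Xa Ya] V1a]]]]] [V2 [U2 [V2x [b [[Hb nb] V2b]]]]]].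
    destruct (classic (X b)) as [Xb|nXb].
    + right. split.
      * exists V1. repeat split; auto. exists a; auto.
      * exists V2. repeat split; auto. exists b. split; auto.
    + left. split.
      * exists V1. repeat split; auto. exists a; auto.
      * exists V2. repeat split; auto. exists b. split; auto.
Qed.

Lemma inter_list_X (G : LSGroup) (H X : G -> Prop) (l : list (G -> Prop)) :
  subset G X H -> (forall A, In A l -> A = X) -> subset G X (inter_list G H l).
Proof.
  intros sX hl x Xx. split; auto. intros A HA. rewrite (hl A HA). exact Xx.
Qed.

Lemma reduce_list (G : LSGroup) (H X : G -> Prop) (E : (G -> Prop) -> Prop) :
  forall l, (forall A, In A l -> E A \/ A = X) ->
  exists l', (forall A, In A l' -> E A) /\
    subset G (inter_list G H (X :: l')) (inter_list G H l).
Proof.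
  induction l as [|Y l IH]; intros hl.
  - exists []. split. intros A []. intros x [Hx _]. split; auto. intros A [].
  - destruct IH as [l' [h1 h2]]. intros A HA; apply hl; simpl; auto.
    destruct (hl Y (or_introl eq_refl)) as [EY| ->].
    + exists (Y :: l'). split.
      * intros A [<-|HA]; auto.
      * intros x [Hx hx].
        assert (hx2 : inter_list G H (X :: l') x).
        { split; auto. intros A [<-|HA]; apply hx; simpl; auto. }
        destruct (h2 x hx2) as [_ h3].
        split; auto. intros A [<-|HA]. apply hx; simpl; auto. exact (h3 A HA).
    + exists l'. split; auto. intros x hx. destruct (h2 x hx) as [Hx h3].
      split; auto. intros A [<-|HA]. apply (proj2 hx); simpl; auto. exact (h3 A HA).
Qed.

Lemma subfamily (G : LSGroup) (H : G -> Prop) (F F' : (G -> Prop) -> Prop) :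
  ends_family G H F -> (forall Y, F' Y -> F Y) -> ends_family G H F'.
Proof.
  intros [h1 h2] s. split; auto.
Qed.

Lemma add_to_end (G : LSGroup) (H X : G -> Prop) E :
  is_end G H E -> coarsely_clopen G H X ->
  (forall l, (forall A, In A l -> E A) -> ~ bddH G H (inter_list G H (X :: l))) ->
  E X.
Proof.
  intros [[Ecc Eint] Emax] cX hX.
  apply (Emax (fun Y => E Y \/ Y = X)); [|auto|auto].
  split.
  - intros A [EA| ->]; auto. split; auto. intro bX. apply (hX [] (fun A h => match h with end)).
    apply (bddH_sub G H _ _ bX). intros x [_ hx]. apply hx. simpl; auto.
  - intros l hl bl. destruct (reduce_list G H X E l hl) as [l' [h1 h2]].
    apply (hX l' h1). exact (bddH_sub G H _ _ bl h2).
Qed.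

Lemma ultra (G : LSGroup) (H A : G -> Prop) E :
  is_end G H E -> coarsely_clopen G H A -> E A \/ E (fun y => H y /\ ~ A y).
Proof.
  intros hE cA. destruct (classic (E A)) as [EA|nEA]; [left; exact EA|right].
  apply (add_to_end G H _ E hE (comp_cc G H A cA)). intros l hl bl.
  apply nEA. apply (add_to_end G H _ E hE cA). intros l2 hl2 bl2.
  destruct hE as [[_ Eint] _].
  apply (Eint (l ++ l2)).
  - intros B HB. apply in_app_or in HB. destruct HB; auto.
  - apply (bddH_sub G H _ _ (bddH_union G H _ _ bl bl2)).
    intros x [Hx hx]. destruct (classic (A x)) as [Ax|nAx].
    + right. split; auto. intros B [<-|HB]; auto. apply hx. apply in_or_app; auto.
    + left. split; auto. intros B [<-|HB]; auto. apply hx. apply in_or_app; auto.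
Qed.

Lemma end_inter (G : LSGroup) (H X Y : G -> Prop) E :
  is_end G H E -> E X -> E Y -> E (fun x => X x /\ Y x).
Proof.
  intros hE EX EY. pose proof hE as [[Ecc Eint] _].
  apply (add_to_end G H _ E hE).
  - apply inter_cc; apply Ecc; assumption.
  - intros l hl bl. apply (Eint (X :: Y :: l)).
    + intros B [<-|[<-|HB]]; auto.
    + apply (bddH_sub G H _ _ bl). intros x [Hx hx]. split; auto.
      intros B [<-|HB]. split; apply hx; simpl; auto. apply hx; simpl; auto.
Qed.

Lemma end_full (G : LSGroup) (H : G -> Prop) E : is_end G H E -> E H.
Proof.
  intros hE. pose proof hE as [[Ecc Eint] _].
  apply (add_to_end G H _ E hE).
  - split. intros x h; exact h. intros U HU.
    apply (bddH_sub G H _ _ (bdd_empty G H)).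
    intros x [_ [V [_ [_ [a [[Ha nHa] _]]]]]]. auto.
  - intros l hl bl. apply (Eint l hl). apply (bddH_sub G H _ _ bl).
    intros x [Hx hx]. split; auto. intros B [<-|HB]. exact Hx. exact (hx B HB).
Qed.

Lemma distinct_sep (G : LSGroup) (H : G -> Prop) E E' :
  is_end G H E -> is_end G H E' -> ~ exteq E E' ->
  exists X Y, E X /\ E' Y /\ forall x, X x -> Y x -> False.
Proof.
  intros hE hE' ne. apply not_all_ex_not in ne. destruct ne as [A nA].
  destruct (classic (E A)) as [EA|nEA].
  - assert (nE'A : ~ E' A) by (intro; apply nA; split; auto).
    destruct (ultra G H A E' hE' (proj1 (proj1 (proj1 hE) A EA))) as [h|h].
    + contradiction.
    + exists A, (fun y => H y /\ ~ A y). repeat split; auto. intros x Ax [_ n]; auto.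
  - assert (E'A : E' A) by (apply NNPP; intro; apply nA; split; intro; contradiction).
    destruct (ultra G H A E hE (proj1 (proj1 (proj1 hE') A E'A))) as [h|h].
    + contradiction.
    + exists (fun y => H y /\ ~ A y), A. repeat split; auto. intros x [_ n] Ax; auto.
Qed.

Lemma end_exists (G : LSGroup) (H X : G -> Prop) :
  coarsely_clopen G H X -> ~ bddH G H X -> exists F, is_end G H F /\ F X.
Proof.
  intros cX uX.
  set (P := fun (F : (G -> Prop) -> Prop) => ends_family G H (fun Y => F Y \/ Y = X)).
  assert (P0 : forall D, (forall Y, ~ D Y) -> P D).
  { intros D hD. split.
    - intros A [DA| ->]; [exfalso; exact (hD A DA)|]. split; auto.
    - intros l hl bl. apply uX. apply (bddH_sub G H _ _ bl).
      apply inter_list_X. apply (proj1 cX).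
      intros A HA. destruct (hl A HA) as [h|h]; [exfalso; exact (hD A h)|exact h]. }
  destruct (classical_sets.Zorn_bigcup (P:=P)) as [A [PA Amax]].
  - intros F FP Ftot.
    assert (key : forall l, (forall Y, In Y l ->
        (classical_sets.bigcup F (fun Z => Z)) Y \/ Y = X) ->
        exists D, (F D \/ (forall Y, ~ D Y)) /\ forall Y, In Y l -> D Y \/ Y = X).
    { induction l as [|Y l IH]; intros hl.
      - exists (fun _ => False). split. right; auto. intros Y [].
      - destruct IH as [D [hD hDl]]. intros Z HZ; apply hl; simpl; auto.
        destruct (hl Y (or_introl eq_refl)) as [[D' FD' D'Y]| ->].
        + destruct hD as [FD|eD].
          * destruct (Ftot D D' FD FD') as [s|s].
            -- exists D'. split; auto. intros Z [<-|HZ]; auto.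
               destruct (hDl Z HZ); auto.
            -- exists D. split; auto. intros Z [<-|HZ]; auto.
          * exists D'. split; auto. intros Z [<-|HZ]; auto.
            destruct (hDl Z HZ) as [h|h]; [exfalso; exact (eD Z h)|auto].
        + exists D. split; auto. intros Z [<-|HZ]; auto. }
    split.
    + intros Y [[D FD DY]| ->].
      * exact (proj1 (FP D FD) Y (or_introl DY)).
      * exact (proj1 (P0 (fun _ => False) (fun _ h => h)) X (or_intror eq_refl)).
    + intros l hl. destruct (key l hl) as [D [hD hDl]].
      assert (PD : P D) by (destruct hD as [FD|eD]; [exact (FP D FD)|exact (P0 D eD)]).
      exact (proj2 PD l hDl).
  - exists (fun Y => A Y \/ Y = X). split; [|right; reflexivity].
    split; [exact PA|].
    intros F' HF' hsub Y F'Y. apply NNPP. intro nY.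
    apply (Amax F').
    + split.
      * intros Z AZ. apply hsub. left; exact AZ.
      * intro s. apply nY. left. apply s. exact F'Y.
    + apply (subfamily G H F' _ HF'). intros Z [h| ->]; auto.
Qed.

Lemma Forall2_In_r {A B : Type} (R : A -> B -> Prop) l l' y :
  Forall2 R l l' -> In y l' -> exists x, In x l /\ R x y.
Proof.
  intros hF. induction hF as [|a b l l' hab hF IH]; intros hy; [destruct hy|].
  destruct hy as [<-|hy].
  - exists a; simpl; auto.
  - destruct (IH hy) as [x [hx hR]]. exists x; simpl; auto.
Qed.

Lemma pwd_map {A B : Type} (f : A -> B) R L :
  pwd (fun a b => R (f a) (f b)) L -> pwd R (map f L).
Proof.
  induction L as [|a L IH]; simpl; auto. intros [h1 h2]. split; auto.
  intros y hy. apply in_map_iff in hy. destruct hy as [x [<- hx]]. auto.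
Qed.

Lemma pwd_mono {A : Type} (R R' : A -> A -> Prop) L :
  (forall a b, R a b -> R' a b) -> pwd R L -> pwd R' L.
Proof.
  intros hR. induction L as [|a L IH]; simpl; auto. intros [h1 h2]. split; auto.
Qed.

Definition disjp (G : LSGroup) (p q : ((G -> Prop) -> Prop) * (G -> Prop)) :=
  forall x, snd p x -> snd q x -> False.

Lemma pwd_shrink (G : LSGroup) P P' :
  Forall2 (fun p p' => fst p' = fst p /\ subset G (snd p') (snd p)) P P' ->
  pwd (disjp G) P -> pwd (disjp G) P'.
Proof.
  intros hF. induction hF as [|a b l l' hab hF IH]; simpl; auto.
  intros [h1 h2]. split; auto.
  intros y hy x bx yx. destruct (Forall2_In_r _ _ _ _ hF hy) as [z [hz [_ hzy]]].
  apply (h1 z hz x); [apply (proj2 hab); exact bx | apply hzy; exact yx].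
Qed.

Lemma Forall2_fst (G : LSGroup) P P' :
  Forall2 (fun (p p' : ((G -> Prop) -> Prop) * (G -> Prop)) =>
     fst p' = fst p /\ subset G (snd p') (snd p)) P P' ->
  map fst P' = map fst P.
Proof.
  intros hF. induction hF as [|a b l l' hab hF IH]; simpl; auto.
  rewrite (proj1 hab), IH. reflexivity.
Qed.

Lemma sep_step (G : LSGroup) (H : G -> Prop) E : is_end G H E ->
  forall P : list (((G -> Prop) -> Prop) * (G -> Prop)),
  (forall p, In p P -> is_end G H (fst p) /\ fst p (snd p) /\ ~ exteq E (fst p)) ->
  exists C0 P', E C0 /\
    Forall2 (fun p p' => fst p' = fst p /\ subset G (snd p') (snd p)) P P' /\
    (forall p', In p' P' -> fst p' (snd p')) /\
    (forall p', In p' P' -> forall x, C0 x -> snd p' x -> False).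
Proof.
  intros hE. induction P as [|p P IH]; intros hP.
  - exists H, []. split; [apply end_full; exact hE|]. split; [constructor|].
    split; intros p' [].
  - destruct IH as [C0 [P' [EC0 [hF [hin hdis]]]]].
    { intros q hq; apply hP; simpl; auto. }
    destruct (hP p (or_introl eq_refl)) as [ep [pp ne]].
    destruct (distinct_sep G H E (fst p) hE ep ne) as [X [Y [EX [pY dXY]]]].
    exists (fun x => C0 x /\ X x), ((fst p, fun x => snd p x /\ Y x) :: P').
    split; [apply (end_inter G H); auto|].
    split.
    + constructor; auto. split; auto. intros x [h _]; exact h.
    + split.
      * intros p' [<-|hp']; auto. simpl. apply (end_inter G H); auto.
      * intros p' [<-|hp'] x [c0 xX] hx.
        -- apply (dXY x xX). exact (proj2 hx).
        -- exact (hdis p' hp' x c0 hx).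
Qed.

Lemma sep (G : LSGroup) (H : G -> Prop) : forall L,
  (forall E, In E L -> is_end G H E) -> pwd (fun a b => ~ exteq a b) L ->
  exists P, map fst P = L /\ (forall p, In p P -> fst p (snd p)) /\ pwd (disjp G) P.
Proof.
  induction L as [|E L IH]; intros hL hpw.
  - exists []. simpl. split; auto. split; auto. intros p [].
  - destruct hpw as [h1 h2].
    destruct IH as [P0 [hm [hin hd]]]; auto. intros; apply hL; simpl; auto.
    destruct (sep_step G H E (hL E (or_introl eq_refl)) P0) as [C0 [P' [EC0 [hF [hin' hdis]]]]].
    { intros p hp. split; [|split].
      - apply hL. right. rewrite <- hm. apply in_map; auto.
      - auto.
      - apply h1. rewrite <- hm. apply in_map; auto. }
    exists ((E, C0) :: P'). simpl. split.
    + rewrite (Forall2_fst G P0 P' hF), hm. reflexivity.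
    + split.
      * intros p [<-|hp]; auto.
      * split.
        -- intros y hy x c0 yx. exact (hdis y hy x c0 yx).
        -- exact (pwd_shrink G P0 P' hF hd).
Qed.

Lemma build_ends (G : LSGroup) (H : G -> Prop) : forall Cs,
  (forall C, In C Cs -> coarsely_clopen G H C /\ ~ bddH G H C) ->
  pwd (fun a b => forall x, a x -> b x -> False) Cs ->
  exists LF, length LF = length Cs /\
    (forall F, In F LF -> is_end G H F /\ exists C, In C Cs /\ F C) /\
    pwd (fun a b => ~ exteq a b) LF.
Proof.
  induction Cs as [|C Cs IH]; intros hC hpw.
  - exists []. simpl. split; auto. split; auto. intros F [].
  - destruct hpw as [h1 h2].
    destruct IH as [LF [hlen [hLF hpwF]]]; auto. intros; apply hC; simpl; auto.
    destruct (hC C (or_introl eq_refl)) as [cC uC].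
    destruct (end_exists G H C cC uC) as [F [eF FC]].
    exists (F :: LF). simpl. split; [lia|]. split.
    + intros F' [<-|hF']. split; auto. exists C; auto.
      destruct (hLF F' hF') as [e [C' [hC' FC']]]. split; auto. exists C'; auto.
    + split; auto. intros F' hF' ex.
      destruct (hLF F' hF') as [e [C' [hC' FC']]].
      apply (proj2 (proj1 eF) [C; C']).
      * intros A [<-|[<-|[]]]; auto. apply ex; auto.
      * apply (bddH_sub G H _ _ (bdd_empty G H)).
        intros x [_ hx]. apply (h1 C' hC' x); apply hx; simpl; auto.
Qed.

Lemma pigeon {A : Type} : forall (LF M : list (A -> Prop)),
  pwd (fun a b => ~ exteq a b) LF ->
  (forall F, In F LF -> exists F', In F' M /\ exteq F F') ->
  length LF <= length M.
Proof.
  induction LF as [|F LF IH]; intros M hpw hM; simpl; [lia|].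
  destruct hpw as [h1 h2].
  destruct (hM F (or_introl eq_refl)) as [F' [hF' eF]].
  destruct (in_split _ _ hF') as [M1 [M2 ->]].
  assert (length LF <= length (M1 ++ M2)).
  { apply IH; auto. intros y hy. destruct (hM y (or_intror hy)) as [e [he ey]].
    exists e. split; auto. apply in_app_or in he. apply in_or_app.
    destruct he as [he|[<-|he]]; auto. exfalso. apply (h1 y hy).
    intros Z. rewrite (eF Z), (ey Z). tauto. }
  rewrite length_app in *. simpl. lia.
Qed.

Lemma build (G : LSGroup) (H : G -> Prop) n :
  ~ (exists l, length l <= n /\ forall E, is_end G H E ->
       exists E', In E' l /\ forall A, E A <-> E' A) ->
  forall k, k <= S n -> exists L, length L = k /\
    (forall E, In E L -> is_end G H E) /\ pwd (fun a b => ~ exteq a b) L.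
Proof.
  intros hno. induction k as [|k IH]; intros hk.
  - exists []. simpl. split; auto. split; auto. intros E [].
  - destruct IH as [L [hlen [hL hpw]]]. lia.
    assert (exists E, is_end G H E /\ forall E', In E' L -> ~ exteq E E') as [E [eE hE]].
    { apply NNPP. intro nx. apply hno. exists L. split; [lia|].
      intros E eE. apply NNPP. intro ny. apply nx. exists E. split; auto.
      intros E' hE' ex. apply ny. exists E'. split; auto. }
    exists (E :: L). simpl. split; auto. split; auto.
    intros E' [<-|hE']; auto.
Qed.

Lemma gen_in (G : LSGroup) (K : G -> Prop) : bdd_generated_subgroup G K ->
  exists S, bounded G S /\ symmetric G S /\ (forall x, K x <-> generated G S x) /\
    subset G S K /\ (forall K', is_subgroup G K' -> subset G S K' -> subset G K K').
Proof.
  intros [sK [S [bS [symS eq]]]]. exists S. split; auto. split; auto. split; auto. split.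
  - intros x Sx. apply eq. intros K' _ h. apply h, Sx.
  - intros K' sK' sS x Kx. apply (proj1 (eq x) Kx K' sK' sS).
Qed.

Lemma cc_restrict (G : LSGroup) (K C : G -> Prop) :
  coarsely_clopen G (fun _ => True) C -> coarsely_clopen G K (fun x => C x /\ K x).
Proof.
  intros [_ cC]. split. intros x [_ h]; exact h.
  intros U [ucov [usub [B [[bB sBK] uref]]]].
  set (U' := fun V => U V \/ exists x, ~ K x /\ V = (fun y => y = x)).
  assert (hU' : unif_bdd_cover G (fun _ => True) U').
  { split; [|split].
    - intros x _. destruct (classic (K x)) as [kx|nkx].
      + destruct (ucov x kx) as [V [UV Vx]]. exists V; split; [left; auto|auto].
      + exists (fun y => y = x). split; [right; exists x; auto | reflexivity].
    - intros V _ x _; exact I.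
    - exists (fun x => B x \/ x = one G). split.
      + split. apply bounded_union; [exact bB | apply bdd_single]. intros ? ?; exact I.
      + intros V [UV|[x [nx ->]]].
        * destruct (uref V UV) as [h [_ sV]]. exists h. split; [exact I|].
          intros y Vy. destruct (sV y Vy) as [b [Bb ->]]. exists b; auto.
        * exists x. split; [exact I|]. intros y ->. exists (one G).
          split; [right; reflexivity| symmetry; apply mulg1]. }
  destruct (cC U' hU') as [bD _]. split.
  - apply (bounded_sub _ _ _ bD).
    intros x [[V [UV [Vx [a [[Ca Ka] Va]]]]] [V2 [UV2 [V2x [b [[Kb nb] V2b]]]]]]. split.
    + exists V. split; [left; auto|]. split; auto. exists a; auto.
    + exists V2. split; [left; auto|]. split; auto. exists b.
      split; [split; [exact I| intro Cb; apply nb; auto] | exact V2b].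
  - intros x [[V [UV [Vx _]]] _]. exact (usub V UV x Vx).
Qed.

Lemma combine (G : LSGroup) Gi (Q : (G -> Prop) -> nat -> Prop) :
  bdd_gen_basis G Gi -> forall Cs,
  (forall C, In C Cs -> exists B0, bounded G B0 /\ forall l, subset G B0 (Gi l) -> Q C l) ->
  exists l, forall C, In C Cs -> Q C l.
Proof.
  intros [_ cov] Cs hC.
  assert (exists B, bounded G B /\ forall C, In C Cs -> forall l, subset G B (Gi l) -> Q C l)
    as [B [bB hB]].
  { clear cov. induction Cs as [|C Cs IH].
    - exists (fun x => x = one G). split. apply bdd_single. intros C [].
    - destruct IH as [B [bB hB]]. intros; apply hC; simpl; auto.
      destruct (hC C (or_introl eq_refl)) as [B0 [bB0 h0]].
      exists (fun x => B0 x \/ B x). split. apply bounded_union; auto.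
      intros C' [<-|hC'] l sl.
      + apply h0. intros x hx; apply sl; left; auto.
      + apply (hB C' hC'). intros x hx; apply sl; right; auto. }
  destruct (cov B bB) as [l sl]. exists l. intros C hC'. apply (hB C hC' l sl).
Qed.

Lemma unb (G : LSGroup) Gi C : bdd_gen_basis G Gi -> (forall i, ~ bddH G (Gi i) (Gi i)) ->
  coarsely_clopen G (fun _ => True) C -> ~ bddH G (fun _ => True) C ->
  exists B0, bounded G B0 /\ forall l, subset G B0 (Gi l) ->
    ~ bddH G (Gi l) (fun x => C x /\ Gi l x).
Proof.
  intros hb unbG cC uC. pose proof hb as [bg cov].
  destruct (gen_in G _ (bg 0)) as [S [bS [symS [eqS [sSK minS]]]]].
  set (B := fun x => S x \/ x = one G).
  assert (bB : bounded G B) by (apply bounded_union; [exact bS| apply bdd_single]).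
  set (U := fun V => exists g, V = (fun x => exists b, B b /\ x = mul G g b)).
  assert (hU : unif_bdd_cover G (fun _ => True) U).
  { split; [|split].
    - intros x _. exists (fun y => exists b, B b /\ y = mul G x b). split.
      + exists x; reflexivity.
      + exists (one G). split. right; reflexivity. symmetry; apply mulg1.
    - intros V _ x _; exact I.
    - exists B. split. split; [exact bB | intros x _; exact I].
      intros V [g ->]. exists g. split; [exact I|]. intros x h; exact h. }
  destruct (proj2 cC U hU) as [bD _].
  set (D := fun x => star G C U x /\ star G (fun y => True /\ ~ C y) U x) in bD.
  assert (key : forall x s, C x -> S s -> ~ C (mul G x s) -> D x).
  { intros x s Cx Ss nC. split.
    - exists (fun y => exists b, B b /\ y = mul G x b). split; [exists x; reflexivity|].
      split. exists (one G). split. right; reflexivity. symmetry; apply mulg1.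
      exists x. split; auto. exists (one G). split. right; reflexivity. symmetry; apply mulg1.
    - exists (fun y => exists b, B b /\ y = mul G x b). split; [exists x; reflexivity|].
      split. exists (one G). split. right; reflexivity. symmetry; apply mulg1.
      exists (mul G x s). split. split; [exact I|exact nC]. exists s. split; [left; auto|reflexivity]. }
  destruct (cov (fun x => D x \/ S x) (bounded_union G _ _ bD bS)) as [k sk].
  destruct (gen_in G _ (bg k)) as [Sk [bSk [_ [eqk [sSkk minSk]]]]].
  destruct (classic (bddH G (Gi k) (fun x => C x /\ Gi k x))) as [bk|ubk].
  2: { exists Sk. split; auto. intros l sl bl. apply ubk. destruct bl as [bl _]. split.
       - apply (bounded_sub _ _ _ bl). intros x [Cx kx]. split; auto.
         apply (minSk (Gi l) (proj1 (bg l)) sl x kx).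
       - intros x [_ kx]; exact kx. }
  assert (exists x, C x /\ ~ Gi k x) as [x [Cx nkx]].
  { apply NNPP. intro nx. apply uC. split.
    - apply (bounded_sub _ _ _ (proj1 bk)). intros y Cy. split; auto.
      apply NNPP; intro; apply nx; exists y; auto.
    - intros y _; exact I. }
  destruct (proj1 (bg k)) as [k1 [kmul kinv]].
  assert (notin : forall w y, ~ Gi k w -> Gi k y -> ~ Gi k (mul G w y)).
  { intros w y nw ky h. apply nw. rewrite <- (mulKV G w y). apply kmul; auto. }
  set (K := fun y => Gi k y /\ forall w, ~ Gi k w -> (C w <-> C (mul G w y))).
  assert (sgK : is_subgroup G K).
  { split; [|split].
    - split; [exact k1|]. intros w nw. rewrite mulg1. tauto.
    - intros y1 y2 [h1 e1] [h2 e2]. split; [apply kmul; auto|]. intros w nw.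
      rewrite mulA. rewrite (e1 w nw). apply e2. apply notin; auto.
    - intros y [h e]. split; [apply kinv; auto|]. intros w nw.
      assert (nw' := notin w (inv G y) nw (kinv y h)). rewrite (e _ nw').
      rewrite mulVK. tauto. }
  assert (sSK' : subset G S K).
  { intros s Ss. assert (skS : Gi k s) by (apply sk; right; exact Ss).
    split; auto. intros w nw. split.
    - intro Cw. apply NNPP; intro nC. apply nw. apply sk. left. apply (key w s); auto.
    - intro Cws. apply NNPP; intro nC. apply (notin w s nw skS). apply sk. left.
      apply (key (mul G w s) (inv G s)); auto. rewrite mulKV. exact nC. }
  exists (fun y => y = x \/ S y). split.
  { apply bounded_union; [apply bdd_single| exact bS]. }
  intros l sl bl. apply (unbG 0). split; [|intros y h; exact h].
  apply (bounded_sub G _ _ (bounded_mul G _ _ (bdd_single G (inv G x)) (proj1 bl))).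
  intros y y0. exists (inv G x), (mul G x y). split; [reflexivity|]. split.
  - split.
    + assert (Ky : K y) by exact (proj1 (eqS y) y0 K sgK sSK').
      exact (proj1 (proj2 Ky x nkx) Cx).
    + apply (proj1 (proj2 (proj1 (bg l)))). apply sl; left; reflexivity.
      apply (minS (Gi l) (proj1 (bg l)) (fun s hs => sl s (or_intror hs)) y y0).
  - symmetry; apply mulKg.
Qed.

Theorem theorem9p6 (G : LSGroup) (Gi : nat -> G -> Prop) (m : option nat) :
  bdd_gen_basis G Gi ->
  (forall i, ~ bddH G (Gi i) (Gi i)) ->
  (forall i, at_most_ends G (Gi i) m) ->
  at_most_ends G (fun _ : G => True) m.
Proof.
  intros hb unbG hm. destruct m as [n|]; [|exact I].
  simpl. apply NNPP. intro hno.
  destruct (build G (fun _ => True) n hno (S n) (le_n _)) as [L [hlen [hL hpw]]].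
  destruct (sep G _ L hL hpw) as [P [hm1 [hin hd]]].
  set (Cs := map snd P).
  assert (hCs : forall C, In C Cs -> exists E, is_end G (fun _ => True) E /\ E C).
  { intros C hC. apply in_map_iff in hC. destruct hC as [p [<- hp]]. exists (fst p). split.
    - apply hL. rewrite <- hm1. apply in_map; auto.
    - apply hin; auto. }
  destruct (combine G Gi (fun C l => ~ bddH G (Gi l) (fun x => C x /\ Gi l x)) hb Cs) as [l hl].
  { intros C hC. destruct (hCs C hC) as [E [eE EC]].
    destruct (proj1 (proj1 eE) C EC) as [cC uC]. exact (unb G Gi C hb unbG cC uC). }
  destruct (build_ends G (Gi l) (map (fun C x => C x /\ Gi l x) Cs)) as [LF [hlenF [hLF hpwF]]].
  { intros C' hC'. apply in_map_iff in hC'. destruct hC' as [C [<- hC]]. split.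
    - destruct (hCs C hC) as [E [eE EC]]. apply cc_restrict.
      exact (proj1 (proj1 (proj1 eE) C EC)).
    - apply hl; auto. }
  { apply pwd_map. unfold Cs. apply pwd_map. apply (pwd_mono (disjp G)); auto.
    intros a b h x; simpl; intros [ax _] [bx _]. exact (h x ax bx). }
  specialize (hm l). simpl in hm. destruct hm as [M [hM hMc]].
  assert (hle : length LF <= length M).
  { apply pigeon; auto. intros F hF. destruct (hMc F (proj1 (hLF F hF))) as [F' [h1 h2]].
    exists F'. split; auto. }
  rewrite hlenF in hle. unfold Cs in hle. rewrite !length_map in hle.
  rewrite <- (length_map fst P), hm1, hlen in hle. lia.
Qed.
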